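(* Let $R$ be a commutative ring, $S$ a multiplicative subset of $R$, and let $M$ and $N$ be $u$-$S$-coherent submodules of a $u$-$S$-coherent $R$-module. Then $M+N$ is $u$-$S$-coherent if and only if $M\cap N$ is $u$-$S$-coherent.
   Context: A multiplicative subset $S$ contains $1$ and is closed under products. $M$ is $S$-finite with respect to $s\in S$ if there is a finitely generated submodule $F\subseteq M$ with $sM\subseteq F$. $M$ is $u$-$S$-finitely presented with respect to $s$ if there is an exact sequence $0\to T_1\to F\to M\to T_2\to 0$ with $F$ finitely presented and $sT_1=sT_2=0$. $M$ is $u$-$S$-coherent if there is $s\in S$ such that $M$ is $S$-finite with respect to $s$ and every finitely generated submodule of $M$ is $u$-$S$-finitely presented with respect to $s$. *)

(* Defs.v *)
From HB Require Import structures.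
From mathcomp Require Import all_boot all_algebra.
Set Implicit Arguments. Unset Strict Implicit. Unset Printing Implicit Defensive.
Import GRing.Theory.
Local Open Scope ring_scope.

Definition mult_subset (R : comPzRingType) (S : R -> Prop) : Prop :=
  S 1 /\ (forall a b, S a -> S b -> S (a * b)).

Section Mod.
Variable R : comPzRingType.

Definition is_submodule (V : lmodType R) (M : V -> Prop) : Prop :=
  [/\ M 0, (forall x y, M x -> M y -> M (x + y)) & (forall (a : R) x, M x -> M (a *: x))].

Definition span (V : lmodType R) (gs : seq V) : V -> Prop :=
  fun x => exists c : 'I_(size gs) -> R, x = \sum_(i < size gs) c i *: gs`_i.

Definition fin_gen (V : lmodType R) (K : V -> Prop) : Prop :=
  exists gs : seq V, forall x, K x <-> span gs x.

Definition sum_sub (V : lmodType R) (M N : V -> Prop) : V -> Prop :=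
  fun x => exists a b, M a /\ N b /\ x = a + b.

Definition cap_sub (V : lmodType R) (M N : V -> Prop) : V -> Prop :=
  fun x => M x /\ N x.

Definition S_finite_wrt (V : lmodType R) (M : V -> Prop) (s : R) : Prop :=
  exists gs : seq V, (forall x, span gs x -> M x) /\ (forall x, M x -> span gs (s *: x)).

Definition fin_presented (F : lmodType R) : Prop :=
  exists (n : nat) (f : {linear 'rV[R]_n -> F}),
    (forall y, exists v, f v = y) /\ fin_gen (fun v => f v = 0).

(* u-S-finitely presented w.r.t. s: exact 0 -> T1 -> F -> N -> T2 -> 0 with
   F finitely presented and s T1 = s T2 = 0; here T1 = ker g, T2 = coker g. *)
Definition uS_fin_pres (V : lmodType R) (N : V -> Prop) (s : R) : Prop :=
  exists (F : lmodType R) (g : {linear F -> V}),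
    [/\ fin_presented F,
        (forall x, N (g x)),
        (forall x, g x = 0 -> s *: x = 0) &
        (forall y, N y -> exists x, g x = s *: y)].

Definition uS_coherent (S : R -> Prop) (V : lmodType R) (M : V -> Prop) : Prop :=
  exists s, [/\ S s, S_finite_wrt M s &
    forall gs : seq V, (forall x, x \in gs -> M x) -> uS_fin_pres (span gs) s].

End Mod.

(* Main.v *)
Require Import Defs.
From HB Require Import structures.
From mathcomp Require Import all_boot all_algebra.
From Stdlib Require Import ClassicalEpsilon.
Set Implicit Arguments. Unset Strict Implicit. Unset Printing Implicit Defensive.
Import GRing.Theory.
Local Open Scope ring_scope.
Local Notation span := Defs.span.

Lemma fchoice_ {I A : Type} (P : I -> A -> Prop) :
  (forall i, exists x, P i x) -> exists f : I -> A, forall i, P i (f i).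
Proof.
move=> H; exists (fun i => proj1_sig (constructive_indefinite_description _ (H i))).
by move=> i; case: (constructive_indefinite_description _ (H i)).
Qed.

Section Aux.
Variables (R : comPzRingType) (V : lmodType R).

Lemma sub_sum (P : V -> Prop) I (r : seq I) (Q : pred I) (F : I -> V) :
  is_submodule P -> (forall i, Q i -> P (F i)) -> P (\sum_(i <- r | Q i) F i).
Proof. by case=> P0 PD PZ H; apply: big_ind. Qed.

Lemma sub_sumT (P : V -> Prop) I (r : seq I) (F : I -> V) :
  is_submodule P -> (forall i, P (F i)) -> P (\sum_(i <- r) F i).
Proof. by case=> P0 PD PZ H; apply: big_ind. Qed.

Lemma subN (P : V -> Prop) x : is_submodule P -> P x -> P (- x).
Proof. by case=> _ _ PZ Px; rewrite -scaleN1r; apply: PZ. Qed.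

Lemma subB (P : V -> Prop) x y : is_submodule P -> P x -> P y -> P (x - y).
Proof. by move=> sP Px Py; case: (sP) => _ PD _; apply: PD => //; apply: subN. Qed.

Lemma span_sub (gs : seq V) : is_submodule (span gs).
Proof.
split.
- by exists (fun _ => 0); rewrite big1 // => i _; rewrite scale0r.
- move=> x y [c1 ->] [c2 ->]; exists (fun i => c1 i + c2 i).
  by rewrite -big_split; apply: eq_bigr => i _; rewrite scalerDl.
- move=> a x [c ->]; exists (fun i => a * c i).
  by rewrite scaler_sumr; apply: eq_bigr => i _; rewrite scalerA.
Qed.

Lemma span_nth (gs : seq V) i : (i < size gs)%N -> span gs gs`_i.
Proof.
move=> Hi; exists (fun j => ((j : nat) == i)%:R).
rewrite (bigD1 (Ordinal Hi)) //= eqxx scale1r big1 ?addr0 // => j Hj.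
by rewrite (_ : ((j : nat) == i) = false) ?scale0r //; apply/negbTE; apply: contra Hj => /eqP e; apply/eqP/val_inj.
Qed.

Lemma span_mem (gs : seq V) x : x \in gs -> span gs x.
Proof. by move=> Hx; rewrite -(nth_index 0 Hx); apply: span_nth; rewrite index_mem. Qed.

Lemma span_min (gs : seq V) (P : V -> Prop) : is_submodule P ->
  (forall x, x \in gs -> P x) -> forall x, span gs x -> P x.
Proof.
move=> sP H x [c ->]; apply: sub_sum => // i _.
by case: sP => _ _ PZ; apply: PZ; apply: H; apply: mem_nth.
Qed.

Lemma span_mono (gs1 gs2 : seq V) : (forall x, x \in gs1 -> x \in gs2) ->
  forall x, span gs1 x -> span gs2 x.
Proof. by move=> H; apply: span_min; [apply: span_sub | move=> x /H; apply: span_mem]. Qed.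

Lemma pres_mono (N : V -> Prop) s t : uS_fin_pres N s -> uS_fin_pres N (t * s).
Proof.
case=> F [g [fp gN gk gc]]; exists F, g; split => //.
- by move=> x /gk; rewrite -scalerA => ->; rewrite scaler0.
- by move=> y /gc [x Hx]; exists (t *: x); rewrite linearZ /= Hx scalerA.
Qed.

Definition lc n (m : 'I_n -> V) (v : 'rV[R]_n) : V := \sum_j v 0 j *: m j.

Lemma lcD n (m : 'I_n -> V) v w : lc m (v + w) = lc m v + lc m w.
Proof. by rewrite /lc -big_split; apply: eq_bigr => j _; rewrite mxE scalerDl. Qed.

Lemma lcZ n (m : 'I_n -> V) a v : lc m (a *: v) = a *: lc m v.
Proof. by rewrite /lc scaler_sumr; apply: eq_bigr => j _; rewrite mxE scalerA. Qed.

Lemma lc0 n (m : 'I_n -> V) : lc m 0 = 0.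
Proof. by rewrite /lc big1 // => j _; rewrite mxE scale0r. Qed.

Lemma lcB n (m : 'I_n -> V) v w : lc m (v - w) = lc m v - lc m w.
Proof. by rewrite lcD -[- w]scaleN1r lcZ scaleN1r. Qed.

Lemma lc_sum n (m : 'I_n -> V) I (r : seq I) (P : pred I) (F : I -> 'rV[R]_n) :
  lc m (\sum_(i <- r | P i) F i) = \sum_(i <- r | P i) lc m (F i).
Proof. by apply: big_morph; [apply: lcD | apply: lc0]. Qed.

Lemma lc_in n (m : 'I_n -> V) (Q : V -> Prop) (ks : seq 'rV[R]_n) w :
  is_submodule Q -> (forall y, y \in ks -> Q (lc m y)) -> span ks w -> Q (lc m w).
Proof.
move=> sQ H [c ->]; rewrite lc_sum; apply: sub_sum => // i _.
by rewrite lcZ; case: sQ => _ _ PZ; apply: PZ; apply: H; apply: mem_nth.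
Qed.

End Aux.

Section Main.
Variables (R : comPzRingType) (V : lmodType R).

Lemma cap_subm (M N : V -> Prop) : is_submodule M -> is_submodule N -> is_submodule (cap_sub M N).
Proof.
case=> M0 MD MZ [N0 ND NZ]; split; first by [].
- by move=> x y [] ? ? [] ? ?; split; auto.
- by move=> a x [] ? ?; split; auto.
Qed.

Lemma sum_subm (M N : V -> Prop) : is_submodule M -> is_submodule N -> is_submodule (sum_sub M N).
Proof.
case=> M0 MD MZ [N0 ND NZ]; split; first by exists 0, 0; rewrite addr0.
- move=> x y [a [b [Ma [Nb ->]]]] [a' [b' [Ma' [Nb' ->]]]]; exists (a + a'), (b + b').
  by split; [auto | split; [auto | rewrite addrACA]].
- by move=> c x [a [b [Ma [Nb ->]]]]; exists (c *: a), (c *: b); rewrite scalerDr; auto.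
Qed.

Lemma cap_fin (M N : V -> Prop) s0 sM sN (gsM gsN : seq V) :
  is_submodule M -> is_submodule N ->
  (forall x, span gsM x -> M x) -> (forall x, M x -> span gsM (sM *: x)) ->
  (forall x, span gsN x -> N x) -> (forall x, N x -> span gsN (sN *: x)) ->
  uS_fin_pres (span (gsM ++ gsN)) s0 ->
  S_finite_wrt (cap_sub M N) (s0 * s0 * sN * sM).
Proof.
move=> sMM sNN gM1 gM2 gN1 gN2 [F [g [[n [f [fsurj [ks Hks]]]] gin gker gcok]]].
set G := gsM ++ gsN.
have [u Hu] : exists u : 'I_(size gsM) -> 'rV[R]_n, forall i, g (f (u i)) = s0 *: gsM`_i.
  apply: (@fchoice_ _ _ (fun (i : 'I_(size gsM)) (w : 'rV[R]_n) => g (f w) = s0 *: gsM`_i)) => i.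
  have Hm : gsM`_i \in G by rewrite mem_cat mem_nth.
  have [y Hy] := gcok _ (span_mem Hm).
  have [w Hw] := fsurj y; exists w; by rewrite Hw.
have [v Hv] : exists v : 'I_(size gsN) -> 'rV[R]_n, forall i, g (f (v i)) = s0 *: gsN`_i.
  apply: (@fchoice_ _ _ (fun (i : 'I_(size gsN)) (w : 'rV[R]_n) => g (f w) = s0 *: gsN`_i)) => i.
  have Hm : gsN`_i \in G by rewrite mem_cat mem_nth ?orbT.
  have [y Hy] := gcok _ (span_mem Hm).
  have [w Hw] := fsurj y; exists w; by rewrite Hw.
have [c Hc] : exists c : 'I_n -> 'I_(size G) -> R,
    forall j, g (f 'e_j) = \sum_i c j i *: G`_i.
  by apply: (@fchoice_ _ _ (fun j (c : 'I_(size G) -> R) => g (f 'e_j) = \sum_i c i *: G`_i)) => j; apply: gin.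
pose mj := fun j : 'I_n => \sum_(i : 'I_(size G) | (i < size gsM)%N) c j i *: G`_i.
pose nj := fun j : 'I_n => \sum_(i : 'I_(size G) | ~~ ((i < size gsM)%N)) c j i *: G`_i.
pose hM := lc mj; pose hN := lc nj.
have hMN : forall w, g (f w) = hM w + hN w.
  move=> w; rewrite {1}(row_sum_delta w) !linear_sum /= /hM /hN /lc -big_split.
  apply: eq_bigr => j _; rewrite !linearZ /= Hc (bigID (fun i : 'I__ => (i < size gsM)%N)) /=.
  by rewrite scalerDr.
have GM : forall i : 'I_(size G), (i < size gsM)%N -> M G`_i.
  by move=> i H; rewrite /G nth_cat H; apply: gM1; apply: span_nth.
have GN : forall i : 'I_(size G), ~~ ((i < size gsM)%N) -> N G`_i.
  move=> i H; rewrite /G nth_cat (negbTE H); apply: gN1; apply: span_nth.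
  have Hi : (i < size gsM + size gsN)%N by rewrite -size_cat; exact: ltn_ord.
  by rewrite -leqNgt in H; rewrite ltn_subLR.
have hMM : forall w, M (hM w).
  move=> w; rewrite /hM /lc.
  apply: (sub_sumT _ sMM) => j; case: (sMM) => _ _ MZ; apply: (MZ).
  apply: (@sub_sum _ _ _ _ _ (fun i : 'I_(size G) => (i < size gsM)%N) _ sMM) => i Hi; apply: (MZ); exact: GM.
have hNN : forall w, N (hN w).
  move=> w; rewrite /hN /lc; apply: (sub_sumT _ sNN) => j; case: (sNN) => _ _ NZ; apply: (NZ).
  apply: (@sub_sum _ _ _ _ _ (fun i : 'I_(size G) => ~~ (i < size gsM)%N) _ sNN) => i Hi; apply: (NZ); exact: GN.
case: (sMM) => M0 MD MZ; case: (sNN) => N0 ND NZ.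
have hMZ : forall a w, hM (a *: w) = a *: hM w := fun a w => lcZ mj a w.
have hNZ : forall a w, hN (a *: w) = a *: hN w := fun a w => lcZ nj a w.
have hMB : forall w w', hM (w - w') = hM w - hM w' := fun w w' => lcB mj w w'.
pose gs := map hM ks ++ [seq hN (u i) | i <- enum 'I_(size gsM)]
             ++ [seq hM (v i) | i <- enum 'I_(size gsN)].
have [S0 SD SZ] := span_sub gs.
exists gs; split.
- apply: span_min; first exact: cap_subm.
  move=> y; rewrite !mem_cat => /orP [/mapP [k kin ->] | /orP [] /mapP [i _ ->]].
  + have fk : f k = 0 by apply/Hks; apply: span_mem.
    have e : hM k = - hN k.
      by apply/eqP; rewrite -subr_eq0 opprK -hMN fk linear0.
    by split; [apply: hMM | rewrite e; apply: subN].
  + split; last exact: hNN.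
    have -> : hN (u i) = s0 *: gsM`_i - hM (u i) by rewrite -Hu hMN [hM _ + _]addrC addrK.
    by apply: subB => //; apply: MZ; apply: gM1; apply: span_nth.
  + split; first exact: hMM.
    have -> : hM (v i) = s0 *: gsN`_i - hN (v i) by rewrite -Hv hMN addrK.
    by apply: subB => //; apply: NZ; apply: gN1; apply: span_nth.
- move=> x [xM xN]; have [al Hal] := gM2 x xM; have [be Hbe] := gN2 x xN.
  pose p := \sum_i al i *: u i. pose q := \sum_i be i *: v i.
  have hp : g (f p) = s0 *: (sM *: x).
    rewrite /p Hal !linear_sum; apply: eq_bigr => i _.
    by rewrite !linearZ /= Hu !scalerA mulrC.
  have hq : g (f q) = s0 *: (sN *: x).
    rewrite /q Hbe !linear_sum; apply: eq_bigr => i _.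
    by rewrite !linearZ /= Hv !scalerA mulrC.
  pose k := sN *: p - sM *: q.
  have hk : g (f k) = 0.
    rewrite !linearB !linearZ /= hp hq !scalerA.
    have -> : sN * s0 * sM = sM * s0 * sN by rewrite mulrC [sN * s0]mulrC mulrA.
    by rewrite scalerN scalerA mulrA subrr.
  have sk : span ks (s0 *: k) by apply/Hks; rewrite linearZ /=; apply: gker.
  have e1 : span gs (hM (s0 *: k)).
    apply: (lc_in (span_sub gs) _ sk) => y yk; apply: span_mem.
    by rewrite mem_cat map_f.
  have e2 : span gs (hN p).
    rewrite /p /hN lc_sum; apply: (sub_sumT _ (span_sub gs)) => i; rewrite lcZ.
    by apply: (SZ); apply: span_mem; rewrite !mem_cat (map_f (fun i => hN (u i))) ?orbT // mem_enum.
  have e3 : span gs (hM q).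
    rewrite /q /hM lc_sum; apply: (sub_sumT _ (span_sub gs)) => i; rewrite lcZ.
    by apply: (SZ); apply: span_mem; rewrite !mem_cat (map_f (fun i => hM (v i))) ?orbT // mem_enum.
  have hMp : hM p = s0 *: (sM *: x) - hN p by rewrite -hp hMN addrK.
  have eq : (s0 * s0 * sN * sM) *: x = hM (s0 *: k) + (s0 * sN) *: hN p + (s0 * sM) *: hM q.
    rewrite /k hMZ hMB !hMZ hMp.
    rewrite !scalerBr !scalerA addrAC subrK subrK; congr (_ *: x).
    by rewrite [s0 * sN * s0]mulrAC.
  by rewrite eq; apply: (SD); [apply: (SD) => //; apply: (SZ) | apply: (SZ)].
Qed.

Lemma fin_mono (M : V -> Prop) s t : S_finite_wrt M s -> S_finite_wrt M (t * s).
Proof.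
case=> gs [H1 H2]; exists gs; split => // x /H2 H.
by rewrite -scalerA; case: (span_sub gs) => _ _ SZ; apply: SZ.
Qed.

Lemma sum_fin (M N : V -> Prop) sM sN (gsM gsN : seq V) :
  is_submodule M -> is_submodule N ->
  (forall x, span gsM x -> M x) -> (forall x, M x -> span gsM (sM *: x)) ->
  (forall x, span gsN x -> N x) -> (forall x, N x -> span gsN (sN *: x)) ->
  S_finite_wrt (sum_sub M N) (sM * sN).
Proof.
move=> sMM sNN gM1 gM2 gN1 gN2.
have [M0 MD MZ] := sMM; have [N0 ND NZ] := sNN.
have [S0 SD SZ] := span_sub (gsM ++ gsN).
exists (gsM ++ gsN); split.
- apply: span_min; first exact: sum_subm.
  move=> y; rewrite mem_cat => /orP [] Hy.
  + exists y, 0; split; first by apply: gM1; apply: span_mem.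
    by rewrite addr0.
  + exists 0, y; split => //; split; first by apply: gN1; apply: span_mem.
    by rewrite add0r.
- move=> x [a [b [Ma [Nb ->]]]].
  rewrite scalerDr; apply: (SD).
  + rewrite mulrC -scalerA; apply: (SZ); move: (gM2 _ Ma); apply: span_mono => y Hy.
    by rewrite mem_cat Hy.
  + rewrite -scalerA; apply: (SZ); move: (gN2 _ Nb); apply: span_mono => y Hy.
    by rewrite mem_cat Hy orbT.
Qed.

End Main.

Theorem corollary3p4 (R : comPzRingType) (S : R -> Prop) (V : lmodType R)
    (M N : V -> Prop) :
  mult_subset S ->
  uS_coherent S (fun _ : V => True) ->
  is_submodule M -> is_submodule N ->
  uS_coherent S M -> uS_coherent S N ->
  (uS_coherent S (sum_sub M N) <-> uS_coherent S (cap_sub M N)).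
Proof.
move=> [S1 Smul] [s0 [Ss0 _ Hamb]] sMM sNN [sM [SsM [gsM [gM1 gM2]] _]]
  [sN [SsN [gsN [gN1 gN2]] _]].
have HG := Hamb (gsM ++ gsN) (fun _ _ => I).
have cap : uS_coherent S (cap_sub M N).
  exists (s0 * s0 * sN * sM); split.
  - by repeat apply: (Smul).
  - exact: cap_fin HG.
  - move=> gs _.
    have <- : s0 * sN * sM * s0 = s0 * s0 * sN * sM by rewrite mulrC !mulrA.
    by apply: pres_mono; apply: Hamb.
have sum : uS_coherent S (sum_sub M N).
  exists (s0 * (sM * sN)); split.
  - by repeat apply: (Smul).
  - by apply: fin_mono; exact: (sum_fin sMM sNN gM1 gM2 gN1 gN2).
  - move=> gs _; rewrite mulrC.
    by apply: pres_mono; apply: Hamb.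
by split.
Qed.
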